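(* The set of infinite words accepted by $\widehat{\mathcal{T}_{p/q}}$ is the topological closure (in $B^{\omega}$ with the product topology) of the set of span-words $\{M_n\ominus\mu_n : n\in\mathbb{N}\}$.
   Context: Let $p>q>1$ be coprime integers, $A_p=\{0,\dots,p-1\}$, $A_q=\{0,\dots,q-1\}$ and $B=\{p-(2q-1),\dots,p-1\}$. For $n\in\mathbb{N}$ and $a\in\mathbb{Z}$, let $\tau(n,a)=\frac{np+a}{q}$, defined only when $q$ divides $np+a$. Let $\mathcal{T}_{p/q}$ be the deterministic automaton with state set $\mathbb{N}$, alphabet $A_p$, initial state $0$, and transitions $n\xrightarrow{a}\tau(n,a)$ for $a\in A_p$ with $\tau(n,a)$ defined. The minimal word $\mu_n\in A_q^{\omega}$ (resp. maximal word $M_n\in\{p-q,\dots,p-1\}^{\omega}$) is the unique infinite word over $A_q$ (resp. over $\{p-q,\dots,p-1\}$) labelling a path of $\mathcal{T}_{p/q}$ starting at $n$. The span-word of $n$ is $M_n\ominus\mu_n$, with $\ominus$ letter-wise subtraction. Let $\widehat{\mathcal{T}_{p/q}}$ be the deterministic automaton with state set $\mathbb{N}$, alphabet $B$, initial state $0$, and transitions $n\xrightarrow{a}\tau(n,a)$ for $a\in B$ with $\tau(n,a)$ defined; an infinite word is accepted if each of its finite prefixes labels a path from $0$. *)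

(* Defs.v *)
From Stdlib Require Import ZArith.
Open Scope Z_scope.

Definition inB (p q : Z) (a : Z) : Prop := p - (2*q - 1) <= a <= p - 1.
Definition inAq (q : Z) (a : Z) : Prop := 0 <= a <= q - 1.
Definition inMax (p q : Z) (a : Z) : Prop := p - q <= a <= p - 1.

(* Transition n --a--> m of T_{p/q} between states of N:
   tau(n,a) = (n p + a)/q is defined (q divides n p + a) and equals m;
   states are natural numbers, so m >= 0. *)
Definition trans (p q : Z) (n a m : Z) : Prop :=
  0 <= m /\ q * m = n * p + a.

Definition labels_path (p q : Z) (n : nat) (w : nat -> Z) : Prop :=
  exists st : nat -> Z, st O = Z.of_nat n /\
    forall i : nat, trans p q (st i) (w i) (st (S i)).

Definition prefix_labels_path (p q : Z) (n : nat) (w : nat -> Z) (k : nat) : Prop :=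
  exists st : nat -> Z, st O = Z.of_nat n /\
    forall i : nat, (i < k)%nat -> trans p q (st i) (w i) (st (S i)).

(* mu is the minimal word of n: the (unique) word over A_q labelling a path from n. *)
Definition is_minimal_word (p q : Z) (n : nat) (mu : nat -> Z) : Prop :=
  (forall i, inAq q (mu i)) /\ labels_path p q n mu.

(* M is the maximal word of n: the (unique) word over {p-q..p-1} labelling a path from n. *)
Definition is_maximal_word (p q : Z) (n : nat) (M : nat -> Z) : Prop :=
  (forall i, inMax p q (M i)) /\ labels_path p q n M.

Definition is_span_word (p q : Z) (s : nat -> Z) : Prop :=
  exists (n : nat) (M mu : nat -> Z),
    is_maximal_word p q n M /\ is_minimal_word p q n mu /\
    forall i, s i = M i - mu i.

Definition accepted_hat (p q : Z) (w : nat -> Z) : Prop :=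
  (forall i, inB p q (w i)) /\
  forall k : nat, prefix_labels_path p q O w k.

(* Closure of a set S of words in B^omega with the product topology
   (B discrete): w in B^omega lies in the closure of S iff every basic
   open neighbourhood of w (cylinder fixed by a finite prefix) meets S. *)
Definition in_closure_Bomega (p q : Z) (S : (nat -> Z) -> Prop) (w : nat -> Z) : Prop :=
  (forall i, inB p q (w i)) /\
  forall k : nat, exists s, S s /\ (forall i, (i < k)%nat -> s i = w i).

(* Main.v *)
Require Import Defs.
From Stdlib Require Import ZArith Znumtheory Lia.
Open Scope Z_scope.

Section S.
Variables p q : Z.
Hypothesis Hq : 1 < q.
Hypothesis Hpq : q < p.

Definition mlet (m : Z) := (-(m*p)) mod q.
Definition mnext (m : Z) := - ((-(m*p)) / q).
Definition Mlet (x : Z) := p - q + ((-(x*p) - (p - q)) mod q).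
Definition Mnext (x : Z) := - ((-(x*p) - (p - q)) / q).

Lemma F1 m : q * mnext m = m*p + mlet m /\ 0 <= mlet m <= q - 1.
Proof.
  unfold mnext, mlet. pose proof (Z_div_mod_eq_full (-(m*p)) q).
  pose proof (Z.mod_pos_bound (-(m*p)) q ltac:(lia)). lia.
Qed.

Lemma F2 x : q * Mnext x = x*p + Mlet x /\ p - q <= Mlet x <= p - 1.
Proof.
  unfold Mnext, Mlet. pose proof (Z_div_mod_eq_full (-(x*p) - (p-q)) q).
  pose proof (Z.mod_pos_bound (-(x*p) - (p-q)) q ltac:(lia)). lia.
Qed.

Lemma F4 m m' a : q * m' = m*p + a -> 0 <= a <= q - 1 -> a = mlet m /\ m' = mnext m.
Proof.
  intros H1 H2. destruct (F1 m) as [E B].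
  assert (K : m' - mnext m = 0) by nia. nia.
Qed.

Lemma F3 x x' a : q * x' = x*p + a -> p - q <= a <= p - 1 -> a = Mlet x /\ x' = Mnext x.
Proof.
  intros H1 H2. destruct (F2 x) as [E B].
  assert (K : x' - Mnext x = 0) by nia. nia.
Qed.

Lemma F6 m T : mlet (m + T*q) = mlet m /\ mnext (m + T*q) = mnext m + T*p.
Proof.
  destruct (F1 m) as [E B].
  destruct (F4 (m + T*q) (mnext m + T*p) (mlet m)) as [A1 A2]; [nia|lia|].
  split; congruence.
Qed.

Fixpoint mpath (n : Z) (i : nat) : Z :=
  match i with O => n | S i => mnext (mpath n i) end.
Fixpoint Mpath (n : Z) (i : nat) : Z :=
  match i with O => n | S i => Mnext (Mpath n i) end.

Lemma mpath_S n i : mpath n (S i) = mpath (mnext n) i.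
Proof. induction i; simpl; [reflexivity|]. simpl in IHi. rewrite IHi. reflexivity. Qed.

Lemma period i : forall j n t,
  mpath (n + t * q^(Z.of_nat (S (i+j)))) i =
  mpath n i + (t * p^(Z.of_nat i) * q^(Z.of_nat j)) * q.
Proof.
  induction i; intros j n t.
  - cbn [mpath Nat.add]. rewrite Nat2Z.inj_succ, Z.pow_succ_r by lia. change (Z.of_nat 0) with 0. lia.
  - replace (S (S i + j)) with (S (i + S j)) by lia.
    cbn [mpath]. rewrite IHi.
    rewrite Nat2Z.inj_succ, Z.pow_succ_r by lia.
    replace (t * p ^ Z.of_nat i * (q ^ Z.of_nat j * q) * q) with
      ((t * p ^ Z.of_nat i * q ^ Z.of_nat j * q) * q) by ring.
    rewrite (proj2 (F6 _ _)).
    rewrite Nat2Z.inj_succ, Z.pow_succ_r by lia. ring.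
Qed.

Lemma period_let k n t i : (i < k)%nat ->
  mlet (mpath (n + t * q^(Z.of_nat k)) i) = mlet (mpath n i).
Proof.
  intros Hi. replace k with (S (i + (k - S i))) by lia.
  rewrite period. apply F6.
Qed.

Hypothesis Hcop : Z.gcd p q = 1.

Lemma coprime_pow e : rel_prime p (q ^ Z.of_nat e).
Proof.
  induction e.
  - simpl. apply rel_prime_sym. apply rel_prime_1.
  - rewrite Nat2Z.inj_succ, Z.pow_succ_r by lia. apply rel_prime_mult; auto.
    apply Zgcd_1_rel_prime; auto.
Qed.

Lemma match_lemma k : forall c : nat -> Z, (forall i, (i < k)%nat -> 0 <= c i <= q - 1) ->
  exists n, forall i, (i < k)%nat -> mlet (mpath n i) = c i.
Proof.
  induction k; intros c Hc.
  - exists 0. intros; lia.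
  - destruct (IHk (fun i => c (S i))) as [n1 Hn1]. { intros; apply Hc; lia. }
    assert (G : Z.gcd p (q ^ Z.of_nat (S k)) = 1) by (apply Zgcd_1_rel_prime, coprime_pow).
    destruct (Z.gcd_bezout _ _ _ G) as [u [v Huv]].
    set (c0 := c O).
    set (t := v * (c0 - q*n1)).
    exists (u * (q*n1 - c0)).
    assert (E : q * (n1 + t * q ^ Z.of_nat k) = (u * (q*n1 - c0)) * p + c0).
    { unfold t. rewrite Nat2Z.inj_succ, Z.pow_succ_r in Huv by lia.
      set (X := q ^ Z.of_nat k) in *.
      replace (q * (n1 + v * (c0 - q * n1) * X)) with (q*n1 + (c0 - q*n1) * (v * (X * q))) by ring.
      replace (v * (X * q)) with (1 - u * p) by lia. ring. }
    destruct (F4 _ _ _ E) as [A1 A2]. { apply Hc; lia. }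
    intros [|i] Hi.
    + simpl. symmetry; exact A1.
    + rewrite mpath_S, <- A2. rewrite period_let by lia. apply Hn1. lia.
Qed.

Lemma mpath_nonneg n i : 0 <= n -> 0 <= mpath n i.
Proof. intros H; induction i; simpl; auto. destruct (F1 (mpath n i)). nia. Qed.
Lemma Mpath_nonneg n i : 0 <= n -> 0 <= Mpath n i.
Proof. intros H; induction i; simpl; auto. destruct (F2 (Mpath n i)). nia. Qed.

End S.

Theorem mainTheorem9 (p q : Z) (Hq : 1 < q) (Hpq : q < p) (Hcop : Z.gcd p q = 1) :
  forall w : nat -> Z,
    accepted_hat p q w <-> in_closure_Bomega p q (is_span_word p q) w.
Proof.
  intros w. split.
  - intros [HB Hpre]. split; [exact HB|]. intros k.
    destruct (Hpre k) as [d [Hd0 Hd]].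
    set (c := fun i => Z.max 0 (p - q - w i)).
    destruct (match_lemma p q Hq Hcop k c) as [n0 Hn0].
    { intros i _. unfold c. specialize (HB i). unfold inB in HB. lia. }
    set (N := n0 + Z.abs n0 * q ^ Z.of_nat k).
    assert (HN : 0 <= N).
    { unfold N. assert (0 < q ^ Z.of_nat k) by (apply Z.pow_pos_nonneg; lia). nia. }
    assert (HNc : forall i, (i < k)%nat -> mlet p q (mpath p q N i) = c i).
    { intros i Hi. unfold N. rewrite period_let by (auto; lia). auto. }
    set (mu := fun i => mlet p q (mpath p q N i)).
    set (M := fun i => Mlet p q (Mpath p q N i)).
    exists (fun i => M i - mu i). split.
    + exists (Z.to_nat N), M, mu. assert (HZ : Z.of_nat (Z.to_nat N) = N) by lia. split; [|split].
      * split. { intros i. unfold M, inMax. apply F2; lia. }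
        exists (Mpath p q N). split; [simpl; lia|]. intros i. split.
        -- apply Mpath_nonneg; lia.
        -- simpl. apply F2; lia.
      * split. { intros i. unfold mu, inAq. apply F1; lia. }
        exists (mpath p q N). split; [simpl; lia|]. intros i. split.
        -- apply mpath_nonneg; lia.
        -- simpl. apply F1; lia.
      * reflexivity.
    + assert (Key : forall i, (i <= k)%nat -> Mpath p q N i = mpath p q N i + d i /\
               ((i < k)%nat -> M i - mu i = w i)).
      { induction i; intros Hi.
        - simpl. rewrite Hd0. split; [simpl; lia|].
          intros H0. unfold M, mu. simpl.
          destruct (Hd O H0) as [D1 D2]. rewrite Hd0 in D2.
          destruct (F1 p q Hq N) as [E1 B1].
          pose proof (HNc O H0) as HC. simpl in HC.
          specialize (HB O). unfold inB, c in *.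
          destruct (F3 p q Hq N (mnext p q N + d 1%nat) (c O + w O)) as [A1 A2];
            unfold c in *; [nia|lia|]. lia.
        - destruct IHi as [IH1 _]; [lia|].
          destruct (Hd i ltac:(lia)) as [D1 D2].
          destruct (F1 p q Hq (mpath p q N i)) as [E1 B1].
          pose proof (HNc i ltac:(lia)) as HC.
          pose proof (HB i) as HBi. unfold inB, c in *.
          destruct (F3 p q Hq (Mpath p q N i) (mnext p q (mpath p q N i) + d (S i))
                      (Z.max 0 (p - q - w i) + w i)) as [A1 A2]; [nia|lia|].
          assert (Hstep : Mpath p q N (S i) = mpath p q N (S i) + d (S i)).
          { simpl. lia. }
          split; [exact Hstep|].
          intros HSi.
          destruct (Hd (S i) HSi) as [D3 D4].
          destruct (F1 p q Hq (mpath p q N (S i))) as [E3 B3].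
          pose proof (HNc (S i) HSi) as HC2.
          pose proof (HB (S i)) as HBS. unfold inB, c in *.
          destruct (F3 p q Hq (Mpath p q N (S i)) (mnext p q (mpath p q N (S i)) + d (S (S i)))
                      (Z.max 0 (p - q - w (S i)) + w (S i))) as [A3 A4]; [nia|lia|].
          unfold M, mu. lia. }
      intros i Hi. apply (Key i); lia.
  - intros [HB Hcl]. split; [exact HB|]. intros k.
    destruct (Hcl k) as [s [[n [M [mu [[HM [sM [sM0 HsM]]] [[Hmu [sm [sm0 Hsm]]] Hs]]]]] Hsw]].
    exists (fun i => sM i - sm i). split; [lia|].
    assert (Ge : forall i, 0 <= sM i - sm i).
    { induction i; [lia|]. destruct (HsM i) as [A1 A2]. destruct (Hsm i) as [A3 A4].
      specialize (HM i). specialize (Hmu i). unfold inMax, inAq in *. nia. }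
    intros i Hi. destruct (HsM i) as [A1 A2]. destruct (Hsm i) as [A3 A4].
    split; [apply Ge|]. rewrite <- Hsw by exact Hi. rewrite Hs. lia.
Qed.
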